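(* Let $\mathfrak g$ be a real nilpotent Lie algebra with a metric $\langle,\rangle$ satisfying $\operatorname{Ric}=\lambda\,\mathrm{id}$ with $\lambda\neq0$, and let $\psi$ be a derivation of $\mathfrak g$, self-adjoint with respect to $\langle,\rangle$, with $\operatorname{Tr}\psi^2\neq0$. Let $\tilde{\mathfrak g}=\mathfrak g\rtimes_\psi\operatorname{Span}\{e_0\}$ be the semidirect product with $[e_0,v]=\psi(v)$ for $v\in\mathfrak g$, and let $\widetilde{\langle,\rangle}=\langle,\rangle-\frac1\lambda(\operatorname{Tr}\psi^2)\,e^0\otimes e^0$, where $e^0$ vanishes on $\mathfrak g$ and $e^0(e_0)=1$. Then $\widetilde{\langle,\rangle}$ satisfies $\widetilde{\operatorname{Ric}}=\lambda\,\mathrm{id}$ and $\tilde{\mathfrak g}=\mathfrak g\oplus^\perp\operatorname{Span}\{e_0\}$ is a pseudo-Iwasawa decomposition.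
   Context: A metric on a Lie algebra is a nondegenerate symmetric bilinear form, possibly indefinite; Ricci operators are those of the corresponding left-invariant pseudo-Riemannian metrics on simply connected Lie groups. A pseudo-Iwasawa decomposition of a metric Lie algebra $\tilde{\mathfrak g}$ is an orthogonal direct sum of vector spaces $\tilde{\mathfrak g}=\mathfrak g\oplus^\perp\mathfrak a$ with $\mathfrak g$ a nilpotent ideal, $\mathfrak a$ an abelian subalgebra, and $\operatorname{ad}X$ self-adjoint for every $X\in\mathfrak a$. *)

(* Defs.v *)
(* A finite-dimensional real Lie algebra is modelled on the
   coordinate space 'rV[R]_N (R : realType), with a bracket given as a
   function on row vectors; a metric is a symmetric invertible Gram matrix. *)
From HB Require Import structures.
From mathcomp Require Import all_boot all_order all_algebra.
From mathcomp Require Import reals.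
Set Implicit Arguments. Unset Strict Implicit. Unset Printing Implicit Defensive.
Import Order.TTheory GRing.Theory Num.Theory.
Local Open Scope ring_scope.

Section MetricLie.
Variables (R : realType) (N : nat).
Notation V := 'rV[R]_N.

(* Lie algebra axioms: bilinear (linearity in the first slot + antisymmetry),
   antisymmetric, Jacobi identity *)
Definition is_lie (br : V -> V -> V) : Prop :=
  [/\ (forall (a : R) (x y z : V), br (a *: x + y) z = a *: br x z + br y z),
      (forall x y : V, br x y = - br y x) &
      (forall x y z : V, br x (br y z) + br y (br z x) + br z (br x y) = 0)].

Definition iter_br (br : V -> V -> V) (xs : seq V) (y : V) : V :=
  foldr (fun x acc => br x acc) y xs.

(* nilpotent: the lower central series reaches 0, i.e. all brackets of
   length k+1 vanish for some k *)
Definition lie_nilpotent (br : V -> V -> V) : Prop :=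
  exists k : nat, forall (xs : seq V) (y : V), size xs = k -> iter_br br xs y = 0.

Definition is_metric (G : 'M[R]_N) : Prop := G^T = G /\ G \in unitmx.

Definition ip (G : 'M[R]_N) (u v : V) : R := (u *m G *m v^T) 0 0.

Definition ebasis (j : 'I_N) : V := delta_mx 0 j.

(* Levi-Civita connection of the left-invariant metric, via Koszul:
   2 <nabla_x y, z> = <[x,y],z> - <[y,z],x> + <[z,x],y> *)
Definition lc_nabla (br : V -> V -> V) (G : 'M[R]_N) (x y : V) : V :=
  (2%:R)^-1 *: ((\row_j (ip G (br x y) (ebasis j) - ip G (br y (ebasis j)) x
                        + ip G (br (ebasis j) x) y)) *m invmx G).

Definition curv (br : V -> V -> V) (G : 'M[R]_N) (x y z : V) : V :=
  lc_nabla br G x (lc_nabla br G y z) - lc_nabla br G y (lc_nabla br G x z)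
  - lc_nabla br G (br x y) z.

Definition ric (br : V -> V -> V) (G : 'M[R]_N) (y z : V) : R :=
  \sum_(i < N) (curv br G (ebasis i) y z) 0 i.

(* Ricci operator (acting on row vectors on the right): <y Ric, z> = ric(y,z) *)
Definition ricci_op (br : V -> V -> V) (G : 'M[R]_N) : 'M[R]_N :=
  (\matrix_(i, j) ric br G (ebasis i) (ebasis j)) *m invmx G.

(* derivation psi : v |-> v *m P *)
Definition is_derivation (br : V -> V -> V) (P : 'M[R]_N) : Prop :=
  forall x y : V, br x y *m P = br (x *m P) y + br x (y *m P).

Definition self_adjoint (G : 'M[R]_N) (P : 'M[R]_N) : Prop :=
  forall u v : V, ip G (u *m P) v = ip G u (v *m P).

(* Pseudo-Iwasawa decomposition  V = g (+)^perp a  where g, a are the row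
   spaces of the matrices Mg, Ma *)
Definition pseudo_iwasawa (br : V -> V -> V) (G : 'M[R]_N)
    (m k : nat) (Mg : 'M[R]_(m, N)) (Ma : 'M[R]_(k, N)) : Prop :=
  [/\ (Mg + Ma == (1%:M : 'M[R]_N))%MS && (Mg :&: Ma == (0 : 'M[R]_N))%MS,
      (forall u v : V, (u <= Mg)%MS -> (v <= Ma)%MS -> ip G u v = 0) /\
      (forall x y : V, (x <= Mg)%MS -> (br y x <= Mg)%MS) /\
      (exists k0 : nat, forall (xs : seq V) (y : V),
          all (fun x => (x <= Mg)%MS) xs -> (y <= Mg)%MS ->
          size xs = k0 -> iter_br br xs y = 0),
      (forall x y : V, (x <= Ma)%MS -> (y <= Ma)%MS -> br x y = 0) &
      (forall x : V, (x <= Ma)%MS ->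
          forall u v : V, ip G (br x u) v = ip G u (br x v))].

End MetricLie.

(* Semidirect product g x|_psi Span{e_0} on 'rV_(n + 1): the last coordinate
   is the e_0-coefficient; [e_0, v] = v *m P for v in g. *)
Section Semidirect.
Variables (R : realType) (n : nat).

Definition sd_br (br : 'rV[R]_n -> 'rV[R]_n -> 'rV[R]_n) (P : 'M[R]_n)
    (x y : 'rV[R]_(n + 1)) : 'rV[R]_(n + 1) :=
  row_mx (br (lsubmx x) (lsubmx y) + (rsubmx x) 0 0 *: (lsubmx y *m P)
          - (rsubmx y) 0 0 *: (lsubmx x *m P)) (0 : 'rV[R]_1).

Definition sd_metric (G : 'M[R]_n) (lambda : R) (P : 'M[R]_n) : 'M[R]_(n + 1) :=
  block_mx G 0 0 (- (lambda^-1 * \tr (P *m P)))%:M.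

Definition sd_g : 'M[R]_(n, n + 1) := row_mx 1%:M 0.
Definition sd_a : 'M[R]_(1, n + 1) := row_mx 0 1%:M.

End Semidirect.

(* Main.v *)
Require Import Defs.
From HB Require Import structures.
From mathcomp Require Import all_boot all_order all_algebra.
From mathcomp Require Import reals.
From mathcomp Require Import ring lra.
Set Implicit Arguments. Unset Strict Implicit. Unset Printing Implicit Defensive.
Import Order.TTheory GRing.Theory Num.Theory.
Local Open Scope ring_scope.

Lemma nilp_trace (F : fieldType) n (A : 'M[F]_n.+1) k : A ^+ k = 0 -> \tr A = 0.
Proof.
move=> Ak.
set Ap := map_mx polyC A.
set X : 'M[{poly F}]_n.+1 := 'X%:M.
have cXA : GRing.comm X Ap.
  rewrite /GRing.comm /X; exact: comm_scalar_mx.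
have Apk : Ap ^+ k = 0.
  by rewrite /Ap -rmorphXn /= Ak map_mx0.
have := subrXX_comm k cXA.
rewrite Apk subr0 => E.
have Hd : char_poly A %| 'X ^+ (k * n.+1).
  rewrite /char_poly.
  have -> : 'X ^+ (k * n.+1) = \det (X ^+ k).
    by rewrite /X -rmorphXn /= det_scalar exprM.
  rewrite E det_mulmx; apply: dvdp_mulr => //.
have : char_poly A %| ('X - 0%:P) ^+ (k * n.+1) by rewrite subr0.
case/dvdp_exp_XsubCP => j _; rewrite subr0.
rewrite eqp_monic ?char_poly_monic ?monicXn // => /eqP Ec.
have sz := size_char_poly A; rewrite Ec size_polyXn in sz.
case: sz => Hj; subst j.
have := char_poly_trace A (ltn0Sn n).
by rewrite Ec coefXn /= eqn_leq ltnn /= andbF => /esym /eqP; rewrite oppr_eq0 => /eqP.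
Qed.

Section Gen.
Variables (R : realType) (N : nat).
Local Notation V := 'rV[R]_N.
Variable br : V -> V -> V.
Variable G : 'M[R]_N.
Hypothesis hl : forall a x y z, br (a *: x + y) z = a *: br x z + br y z.
Hypothesis ha : forall x y, br x y = - br y x.
Hypothesis Gs : G^T = G.
Hypothesis Gu : G \in unitmx.

Local Notation e := (@ebasis R N).
Local Notation Gi := (invmx G).

Lemma brDl x y z : br (x + y) z = br x z + br y z.
Proof. by have := hl 1 x y z; rewrite !scale1r. Qed.
Lemma br0l z : br 0 z = 0.
Proof.
have E := brDl 0 0 z; rewrite addr0 in E.
by apply/(addrI (br 0 z)); rewrite -E addr0.
Qed.
Lemma brZl a x z : br (a *: x) z = a *: br x z.
Proof. by rewrite -[a *: x]addr0 hl br0l addr0. Qed.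
Lemma brNl x z : br (- x) z = - br x z.
Proof. by rewrite -scaleN1r brZl scaleN1r. Qed.
Lemma hr a x y z : br z (a *: x + y) = a *: br z x + br z y.
Proof. by rewrite (ha z) hl (ha z x) (ha z y) scalerN opprD. Qed.
Lemma brDr x y z : br z (x + y) = br z x + br z y.
Proof. by have := hr 1 x y z; rewrite !scale1r. Qed.
Lemma br0r z : br z 0 = 0.
Proof. by rewrite ha br0l oppr0. Qed.
Lemma brZr a x z : br z (a *: x) = a *: br z x.
Proof. by rewrite -[a *: x]addr0 hr br0r addr0. Qed.
Lemma brNr x z : br z (- x) = - br z x.
Proof. by rewrite -scaleN1r brZr scaleN1r. Qed.
Lemma brBl x y z : br (x - y) z = br x z - br y z.
Proof. by rewrite brDl brNl. Qed.
Lemma brBr x y z : br z (x - y) = br z x - br z y.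
Proof. by rewrite brDr brNr. Qed.

Definition linV (f : V -> V) := forall a x y, f (a *: x + y) = a *: f x + f y.
Definition linS (f : V -> R) := forall a x y, f (a *: x + y) = a * f x + f y.

Lemma linV0 f : linV f -> f 0 = 0.
Proof.
by move=> hf; have := hf (-1) 0 0; rewrite scaler0 addr0 scaleN1r addNr.
Qed.
Lemma linS0 f : linS f -> f 0 = 0.
Proof.
by move=> hf; have := hf (-1) 0 0; rewrite scaler0 addr0 mulN1r addNr.
Qed.

Lemma linV_big f I (r : seq I) (P : pred I) (c : I -> R) (w : I -> V) :
  linV f -> f (\sum_(i <- r | P i) c i *: w i) = \sum_(i <- r | P i) c i *: f (w i).
Proof.
move=> hf; elim/big_rec2: _ => [|i y1 y2 _ <-]; first exact: linV0.
by rewrite hf.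
Qed.
Lemma linS_big f I (r : seq I) (P : pred I) (c : I -> R) (w : I -> V) :
  linS f -> f (\sum_(i <- r | P i) c i *: w i) = \sum_(i <- r | P i) c i * f (w i).
Proof.
move=> hf; elim/big_rec2: _ => [|i y1 y2 _ <-]; first exact: linS0.
by rewrite hf.
Qed.

Lemma linV_sum f : linV f -> forall x, f x = \sum_i x 0 i *: f (e i).
Proof. by move=> hf x; rewrite {1}(row_sum_delta x) linV_big. Qed.
Lemma linS_sum f : linS f -> forall x, f x = \sum_i x 0 i * f (e i).
Proof. by move=> hf x; rewrite {1}(row_sum_delta x) linS_big. Qed.

Definition mxf (f : V -> V) : 'M[R]_N := \matrix_i f (e i).

Lemma mxfE f x : linV f -> x *m mxf f = f x.
Proof.
move=> hf; rewrite mulmx_sum_row (linV_sum hf x).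
by apply: eq_bigr => i _; rewrite rowK.
Qed.

Lemma mx_eqP (A B : 'M[R]_N) : (forall x : V, x *m A = x *m B) -> A = B.
Proof. by move=> h; apply/row_matrixP => i; rewrite !rowE h. Qed.

Lemma eM i (M : 'M[R]_N) j : (e i *m M) 0 j = M i j.
Proof. by rewrite /ebasis -rowE mxE. Qed.

Local Notation ip := (ip G).

Lemma GiT : Gi^T = Gi.
Proof. by rewrite trmx_inv Gs. Qed.
Lemma GGi : G *m Gi = 1%:M.
Proof. exact: mulmxV. Qed.
Lemma GiG : Gi *m G = 1%:M.
Proof. exact: mulVmx. Qed.

Lemma ip_sym u v : ip u v = ip v u.
Proof.
have h (A : 'M[R]_1) : A 0 0 = A^T 0 0 by rewrite mxE.
by rewrite /Defs.ip h !trmx_mul Gs trmxK mulmxA.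
Qed.
Lemma ipDl u v w : ip (u + v) w = ip u w + ip v w.
Proof. by rewrite /Defs.ip !mulmxDl mxE. Qed.
Lemma ipZl a u w : ip (a *: u) w = a * ip u w.
Proof. by rewrite /Defs.ip -!scalemxAl mxE. Qed.
Lemma ipLl a u v w : ip (a *: u + v) w = a * ip u w + ip v w.
Proof. by rewrite ipDl ipZl. Qed.
Lemma ipLr a u v w : ip w (a *: u + v) = a * ip w u + ip w v.
Proof. by rewrite ip_sym ipLl !(ip_sym w). Qed.
Lemma ipNl u w : ip (- u) w = - ip u w.
Proof. by rewrite -scaleN1r ipZl mulN1r. Qed.
Lemma ip0l w : ip 0 w = 0.
Proof. by rewrite -(scale0r 0) ipZl mul0r. Qed.
Lemma ipDr u v w : ip w (u + v) = ip w u + ip w v.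
Proof. by rewrite ip_sym ipDl !(ip_sym w). Qed.
Lemma ipZr a u w : ip w (a *: u) = a * ip w u.
Proof. by rewrite ip_sym ipZl (ip_sym w). Qed.
Lemma ipNr u w : ip w (- u) = - ip w u.
Proof. by rewrite ip_sym ipNl (ip_sym w). Qed.
Lemma ip0r w : ip w 0 = 0.
Proof. by rewrite ip_sym ip0l. Qed.

Lemma ip_sumr w I (r : seq I) (P : pred I) (v : I -> V) :
  ip w (\sum_(i <- r | P i) v i) = \sum_(i <- r | P i) ip w (v i).
Proof. by elim/big_rec2: _ => [|i a b _ <-]; [exact: ip0r | rewrite ipDr]. Qed.
Lemma ip_suml w I (r : seq I) (P : pred I) (v : I -> V) :
  ip (\sum_(i <- r | P i) v i) w = \sum_(i <- r | P i) ip (v i) w.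
Proof. by elim/big_rec2: _ => [|i a b _ <-]; [exact: ip0l | rewrite ipDl]. Qed.

Lemma ip_e v j : ip v (e j) = (v *m G) 0 j.
Proof. by rewrite /Defs.ip /ebasis trmx_delta -colE mxE. Qed.
Lemma ip_eGi v j : ip v (e j *m Gi) = v 0 j.
Proof.
rewrite /Defs.ip trmx_mul GiT mulmxA -(mulmxA v) GGi mulmx1.
by rewrite /ebasis trmx_delta -colE mxE.
Qed.

Lemma ip_nondeg u v : (forall j, ip u (e j) = ip v (e j)) -> u = v.
Proof.
move=> h; have : u *m G = v *m G.
  by apply/rowP => j; rewrite -!ip_e.
by move/(congr1 (mulmx^~ Gi)); rewrite -!mulmxA GGi !mulmx1.
Qed.

Definition star (M : 'M[R]_N) : 'M[R]_N := G *m M^T *m Gi.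

Lemma ip_star u M v : ip (u *m star M) v = ip u (v *m M).
Proof.
rewrite /Defs.ip /star trmx_mul !mulmxA -(mulmxA _ Gi) GiG mulmx1.
by rewrite -!mulmxA.
Qed.
Lemma ip_starr u M v : ip u (v *m star M) = ip (u *m M) v.
Proof. by rewrite ip_sym ip_star ip_sym. Qed.

Lemma starK M : star (star M) = M.
Proof.
rewrite /star !trmx_mul trmxK GiT Gs !mulmxA GGi mul1mx -mulmxA GGi.
by rewrite mulmx1.
Qed.
Lemma starM M1 M2 : star (M1 *m M2) = star M2 *m star M1.
Proof.
rewrite /star trmx_mul !mulmxA -(mulmxA _ Gi G) GiG mulmx1.
by rewrite ?mulmxA.
Qed.
Lemma starD M1 M2 : star (M1 + M2) = star M1 + star M2.
Proof. by rewrite /star linearD /= mulmxDr mulmxDl. Qed.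
Lemma starZ a M : star (a *: M) = a *: star M.
Proof. by rewrite /star linearZ /= -scalemxAr -scalemxAl. Qed.
Lemma starN M : star (- M) = - star M.
Proof. by rewrite -scaleN1r starZ scaleN1r. Qed.
Lemma starB M1 M2 : star (M1 - M2) = star M1 - star M2.
Proof. by rewrite starD starN. Qed.
Lemma tr_star M : \tr (star M) = \tr M.
Proof. by rewrite /star mxtrace_mulC mulmxA GiG mul1mx mxtrace_tr. Qed.

Lemma trE (M : 'M[R]_N) : \tr M = \sum_i ip (e i *m M) (e i *m Gi).
Proof. by apply: eq_bigr => i _; rewrite ip_eGi eM. Qed.



Definition Lm (v : V) := mxf (br v).
Lemma linV_br v : linV (br v).
Proof. by move=> a x y; rewrite hr. Qed.
Lemma xLm x v : x *m Lm v = br v x.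
Proof. exact/mxfE/linV_br. Qed.
Lemma LmL a u v : Lm (a *: u + v) = a *: Lm u + Lm v.
Proof. by apply: mx_eqP => x; rewrite mulmxDr -scalemxAr !xLm hl. Qed.

Definition Am (y : V) := mxf (fun x => y *m star (Lm x)).
Lemma linV_A y : linV (fun x => y *m star (Lm x)).
Proof. by move=> a u v; rewrite LmL starD starZ mulmxDr -scalemxAr. Qed.
Lemma xAm x y : x *m Am y = y *m star (Lm x).
Proof. exact/mxfE/linV_A. Qed.
Lemma AmL a u v : Am (a *: u + v) = a *: Am u + Am v.
Proof. by apply: mx_eqP => x; rewrite mulmxDr -scalemxAr !xAm mulmxDl scalemxAl. Qed.

Lemma nablaE x y :
  lc_nabla br G x y = 2%:R^-1 *: (br x y - x *m star (Lm y) - y *m star (Lm x)).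
Proof.
rewrite /lc_nabla; congr (_ *: _).
set w := (br x y - _ - _).
suff E : \row_j (Defs.ip G (br x y) (e j) - Defs.ip G (br y (e j)) x
                        + Defs.ip G (br (e j) x) y) = w *m G.
  by rewrite E mulmxK.
apply/rowP => j; rewrite mxE -ip_e /w !ipDl !ipNl !ip_star !xLm.
rewrite (ip_sym x) (ha x (e j)) ipNr; by rewrite opprK (ip_sym y).
Qed.

Definition Wm (w : V) := 2%:R^-1 *: (- Lm w - Am w - star (Lm w)).
Definition Nm (y : V) := 2%:R^-1 *: (Lm y - star (Lm y) - Am y).

Lemma xWm x w : x *m Wm w = lc_nabla br G x w.
Proof.
rewrite nablaE /Wm -scalemxAr; congr (_ *: _).
rewrite !mulmxDr !mulmxN xLm xAm (ha x w).
by rewrite -!addrA; congr (_ + _); rewrite addrC.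
Qed.
Lemma vNm v y : v *m Nm y = lc_nabla br G y v.
Proof.
rewrite nablaE /Nm -scalemxAr; congr (_ *: _).
rewrite !mulmxDr !mulmxN xLm xAm.
by rewrite -!addrA; congr (_ + _); rewrite addrC.
Qed.

Lemma curvE x y z : curv br G x y z =
  x *m (Wm (lc_nabla br G y z) - Wm z *m Nm y + Lm y *m Wm z).
Proof.
rewrite /curv !mulmxDr mulmxN !mulmxA !xWm vNm xLm (ha x y).
by rewrite -(xWm (- _)) mulNmx xWm opprK.
Qed.

Lemma ricE y z : ric br G y z =
  \tr (Wm (lc_nabla br G y z) - Wm z *m Nm y + Lm y *m Wm z).
Proof. by apply: eq_bigr => i _; rewrite curvE eM. Qed.

Lemma starAm y : star (Am y) = - Am y.
Proof.
apply: mx_eqP => x; apply: ip_nondeg => j.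
rewrite ip_star mulmxN ipNl !xAm ip_starr ip_star !xLm ip_sym.
by rewrite (ha x (e j)) ipNr opprK.
Qed.

Lemma trAm w : \tr (Am w) = 0.
Proof.
rewrite trE.
have -> : \sum_i Defs.ip G (e i *m Am w) (e i *m Gi) =
          Defs.ip G w (\sum_i br (e i) (e i *m Gi)).
  rewrite ip_sumr; apply: eq_bigr => i _; by rewrite xAm ip_star xLm.
have -> : \sum_i br (e i) (e i *m Gi) = 0; last by rewrite ip0r.
set S := \sum_i _.
have eGi i : e i *m Gi = \sum_j Gi i j *: e j.
  by rewrite {1}(row_sum_delta (e i *m Gi)); apply: eq_bigr => j _; rewrite eM.
have HS : S = \sum_i \sum_j Gi i j *: br (e i) (e j).
  by apply: eq_bigr => i _; rewrite eGi linV_big //; exact: linV_br.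
have HS2 : S = - S.
  rewrite {1}HS exchange_big /= HS -sumrN; apply: eq_bigr => i _.
  rewrite -sumrN; apply: eq_bigr => j _.
  have GiE k l : Gi k l = Gi l k by rewrite -{1}GiT mxE.
  by rewrite GiE (ha (e j)) scalerN.
have : (2%:R : R) *: S = 0 by rewrite scaler_nat mulr2n {2}HS2 subrr.
move/(congr1 (fun v => (2%:R : R)^-1 *: v)); rewrite scalerA mulVf ?pnatr_eq0 //.
by rewrite scale1r scaler0.
Qed.


Lemma ricF y z : ric br G y z =
  - \tr (Lm (lc_nabla br G y z)) - 4%:R^-1 * \tr (Am y *m Am z)
  - 2%:R^-1 * \tr (Lm y *m Lm z) - 2%:R^-1 * \tr (Lm y *m star (Lm z)).
Proof.
rewrite ricE /Wm /Nm.
set a := Lm z; set b := Am z; set c := star a; set p := Lm y; set q := star p; set r := Am y.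
set w := Lm _.
rewrite -!scalemxAl -!scalemxAr !(mulmxDl, mulmxDr, mulNmx, mulmxN).
rewrite !(mxtraceD, linearN, mxtraceZ) /=.
rewrite !(mxtraceD, linearN, mxtraceZ) /=.
have t1 : \tr (Am (lc_nabla br G y z)) = 0 by apply: trAm.
have t2 : \tr (star w) = \tr w by apply: tr_star.
have sb : star b = - b by apply: starAm.
have sr : star r = - r by apply: starAm.
have R1 : \tr (c *m q) = \tr (p *m a) by rewrite -starM tr_star.
have R2 : \tr (a *m q) = \tr (c *m p).
  by rewrite -tr_star starM starK mxtrace_mulC.
have R3 : \tr (c *m r) = - \tr (a *m r).
  by rewrite -tr_star starM sr /c starK mulNmx linearN /= mxtrace_mulC.
have R4 : \tr (b *m q) = - \tr (b *m p).
  by rewrite -tr_star starM /q starK sb mulmxN linearN /= mxtrace_mulC.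
have C1 : \tr (p *m a) = \tr (a *m p) by apply: mxtrace_mulC.
have C2 : \tr (p *m b) = \tr (b *m p) by apply: mxtrace_mulC.
have C3 : \tr (b *m r) = \tr (r *m b) by apply: mxtrace_mulC.
have C4 : \tr (p *m c) = \tr (c *m p) by apply: mxtrace_mulC.
rewrite t1 t2 R1 R2 R3 R4 C1 C2 C3 C4.
lra.
Qed.


Section Nil.
Variable P : 'M[R]_N.
Hypothesis hnil : lie_nilpotent br.
Hypothesis hder : is_derivation br P.
Hypothesis hsa : self_adjoint G P.

Definition Zs s (x : V) := forall ws : seq V, size ws = s -> iter_br br ws x = 0.

Lemma iter_lin ws a x y :
  iter_br br ws (a *: x + y) = a *: iter_br br ws x + iter_br br ws y.
Proof. by elim: ws => [|w ws IH] //=; rewrite IH hr. Qed.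

Lemma Zs_lin s a x y : Zs s x -> Zs s y -> Zs s (a *: x + y).
Proof. by move=> hx hy ws hs; rewrite iter_lin hx // hy // scaler0 addr0. Qed.
Lemma Zs_sub s x y : Zs s x -> Zs s y -> Zs s (x - y).
Proof.
move=> hx hy; have -> : x - y = (-1) *: y + x by rewrite scaleN1r addrC.
exact: Zs_lin.
Qed.
Lemma Zs0 x : Zs 0 x -> x = 0.
Proof. by move=> h; apply: (h [::]). Qed.
Lemma Zs_zero s : Zs s 0.
Proof.
move=> ws _; by have := iter_lin ws (-1) 0 0; rewrite scaler0 addr0 scaleN1r addNr.
Qed.
Lemma ZsS s x : Zs s.+1 x <-> forall w, Zs s (br w x).
Proof.
split=> [h w ws hs|h ws].
  by rewrite /iter_br -foldr_rcons; apply: h; rewrite size_rcons hs.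
case/lastP: ws => [//|ws w]; rewrite size_rcons => -[hs].
by rewrite /iter_br foldr_rcons; apply: h.
Qed.
Lemma Zs_mono s x : Zs s x -> Zs s.+1 x.
Proof.
move=> h [//|w ws] /= [hs]; by rewrite h // br0r.
Qed.
Lemma Zs_br s w x : Zs s x -> Zs s (br w x).
Proof. by move/Zs_mono/ZsS. Qed.
Lemma Zs_P s x : Zs s x -> Zs s (x *m P).
Proof.
elim: s x => [|s IH] x.
  by move/Zs0 => ->; rewrite mul0mx; apply: Zs_zero.
move/ZsS=> h; apply/ZsS => w.
have -> : br w (x *m P) = br w x *m P - br (w *m P) x.
  by rewrite hder addrC addKr.
by apply: Zs_sub; [apply: IH; apply: h | apply: h].
Qed.

Lemma nil_pow (M : 'M[R]_N) :
  (forall s x, Zs s.+1 x -> Zs s (x *m M)) -> exists k, M ^+ k = 0.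
Proof.
move=> hM; case: hnil => k hk; exists k.
have H j x : (j <= k)%N -> Zs (k - j) (x *m M ^+ j).
  elim: j => [|j IH] hj; first by rewrite expr0 (_ : 1 = 1%:M) // mulmx1 subn0 => ws; apply: hk.
  rewrite exprSr (_ : M ^+ j * M = M ^+ j *m M) // mulmxA; apply: hM.
  by rewrite -subSn // subSS; apply: IH; apply: ltnW.
apply: mx_eqP => x; rewrite mulmx0; apply: Zs0.
by have := H k x (leqnn k); rewrite subnn.
Qed.

Lemma nilp_trace_gen (F : fieldType) n (A : 'M[F]_n) k : A ^+ k = 0 -> \tr A = 0.
Proof.
case: n A => [|n] A; first by rewrite /mxtrace big_ord0.
exact: nilp_trace.
Qed.

Lemma trL0 w : \tr (Lm w) = 0.
Proof.
have [k hk] : exists k, Lm w ^+ k = 0.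
  by apply: nil_pow => s x /ZsS h; rewrite xLm; apply: h.
exact: nilp_trace_gen hk.
Qed.
Lemma trLL0 y z : \tr (Lm y *m Lm z) = 0.
Proof.
have [k hk] : exists k, (Lm y *m Lm z) ^+ k = 0.
  by apply: nil_pow => s x /ZsS h; rewrite mulmxA !xLm; apply/Zs_br/h.
exact: nilp_trace_gen hk.
Qed.
Lemma trPL0 u : \tr (P *m Lm u) = 0.
Proof.
have [k hk] : exists k, (P *m Lm u) ^+ k = 0.
  by apply: nil_pow => s x /Zs_P /ZsS h; rewrite mulmxA !xLm; apply/h.
exact: nilp_trace_gen hk.
Qed.

Definition Fr (y z : V) := - 4%:R^-1 * \tr (Am y *m Am z) - 2%:R^-1 * \tr (Lm y *m star (Lm z)).

Lemma ric_nil y z : ric br G y z = Fr y z.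
Proof. by rewrite ricF trL0 trLL0 /Fr; lra. Qed.


Lemma PG : P *m G = G *m P^T.
Proof.
have -> : G *m P^T = (P *m G)^T by rewrite trmx_mul Gs.
apply/matrixP => i j; rewrite [RHS]mxE.
have h1 : (P *m G) i j = Defs.ip G (e i *m P) (e j) by rewrite ip_e -mulmxA eM.
have h2 : (P *m G) j i = Defs.ip G (e j *m P) (e i) by rewrite ip_e -mulmxA eM.
by rewrite h1 h2 hsa ip_sym.
Qed.
Lemma starP : star P = P.
Proof. by rewrite /star -PG -mulmxA GGi mulmx1. Qed.
Lemma PtGi : P^T *m Gi = Gi *m P.
Proof.
have := congr1 (fun M => Gi *m M *m Gi) PG.
by rewrite /= !mulmxA GiG mul1mx -!mulmxA GGi mulmx1 => ->.
Qed.

Definition Fm (f : V -> V -> R) : 'M[R]_N := \matrix_(a, b) f (e a) (e b).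

Lemma bil_sum f A B : (forall y, linS (f^~ y)) -> (forall x, linS (f x)) ->
  \sum_i f (e i *m A) (e i *m B) = \tr (A *m Fm f *m B^T).
Proof.
move=> h1 h2; apply: eq_bigr => i _.
rewrite (linS_sum (h1 _)); under eq_bigr do rewrite (linS_sum (h2 _)).
rewrite mxE; under [RHS]eq_bigr do rewrite !mxE mulr_suml.
rewrite exchange_big /=; apply: eq_bigr => a _; rewrite mulr_sumr.
by apply: eq_bigr => b _; rewrite !eM !mxE; ring.
Qed.

Lemma Cas_sym f : (forall y, linS (f^~ y)) -> (forall x, linS (f x)) ->
  \sum_i f (e i) (e i *m Gi) = \sum_i f (e i *m Gi) (e i).
Proof.
move=> h1 h2.
rewrite (eq_bigr (fun i => f (e i *m 1%:M) (e i *m Gi))); last by move=> i _; rewrite mulmx1.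
rewrite [RHS](eq_bigr (fun i => f (e i *m Gi) (e i *m 1%:M))); last by move=> i _; rewrite mulmx1.
by rewrite !bil_sum // mul1mx trmx1 mulmx1 GiT mxtrace_mulC.
Qed.

Lemma Cas_P f : (forall y, linS (f^~ y)) -> (forall x, linS (f x)) ->
  \sum_i f (e i *m P) (e i *m Gi) = \sum_i f (e i) (e i *m Gi *m P).
Proof.
move=> h1 h2.
rewrite [RHS](eq_bigr (fun i => f (e i *m 1%:M) (e i *m (Gi *m P)))); last first.
  by move=> i _; rewrite mulmx1 mulmxA.
by rewrite !bil_sum // mul1mx trmx_mul !GiT PtGi -mulmxA mxtrace_mulC !mulmxA.
Qed.

Lemma contract u v : \sum_k Defs.ip G (e k) u * Defs.ip G (e k *m Gi) v = Defs.ip G u v.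
Proof.
have -> : Defs.ip G u v = \sum_k (u *m G) 0 k * v 0 k.
  rewrite /Defs.ip mxE. apply: eq_big => // k _. by congr (_ * _); rewrite /trmx mxE.
apply: eq_bigr => k _.
by rewrite ip_sym ip_e (ip_sym _ v) ip_eGi.
Qed.

Lemma trLS y z : \tr (Lm y *m star (Lm z)) =
  \sum_j Defs.ip G (br y (e j)) (br z (e j *m Gi)).
Proof. by rewrite trE; apply: eq_bigr => j _; rewrite mulmxA ip_star !xLm. Qed.

Lemma trAA y z : \tr (Am y *m Am z) =
  \sum_i \sum_j Defs.ip G y (br (e i) (e j *m Gi)) * Defs.ip G z (br (e j) (e i *m Gi)).
Proof.
rewrite trE; apply: eq_bigr => i _.
rewrite mulmxA !xAm ip_star xLm.
set w := y *m star (Lm (e i)).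
have lw : linV (fun x => br x (e i *m Gi)) by move=> a u v; rewrite hl.
rewrite (linV_sum lw w) ip_sumr; apply: eq_bigr => j _.
by rewrite ipZr -ip_eGi /w ip_star xLm mulrC.
Qed.

Section Ein.
Variable lam : R.
Hypothesis hric : ricci_op br G = lam%:M.
Hypothesis hlam : lam != 0.

Lemma ric_ee i j : ric br G (e i) (e j) = lam * G i j.
Proof.
have : (\matrix_(i, j) ric br G (e i) (e j)) = lam *: G.
  move: hric; rewrite /ricci_op => /(congr1 (mulmx^~ G)).
  by rewrite mulmxKV // mul_scalar_mx.
by move/(congr1 (fun M : 'M[R]_N => M i j)); rewrite !mxE.
Qed.

Lemma FL1 a u v z : Fr (a *: u + v) z = a * Fr u z + Fr v z.
Proof.
rewrite /Fr LmL AmL !mulmxDl -!scalemxAl !mxtraceD !mxtraceZ; ring.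
Qed.
Lemma FL2 a u v z : Fr z (a *: u + v) = a * Fr z u + Fr z v.
Proof.
rewrite /Fr LmL AmL starD starZ !mulmxDr -!scalemxAr !mxtraceD !mxtraceZ; ring.
Qed.

Lemma Fr_ip y z : Fr y z = lam * Defs.ip G y z.
Proof.
have lip1 x : linS (Defs.ip G x) by move=> a u v; rewrite ipLr.
have lip2 x : linS (Defs.ip G ^~ x) by move=> a u v; rewrite ipLl.
have lF1 x : linS (Fr ^~ x) by move=> a u v; rewrite FL1.
have lF2 x : linS (Fr x) by move=> a u v; rewrite FL2.
have Hij i j : Fr (e i) (e j) = lam * Defs.ip G (e i) (e j).
  by rewrite -ric_nil ric_ee ip_e eM.
have Hi i z' : Fr (e i) z' = lam * Defs.ip G (e i) z'.
  rewrite (linS_sum (lF2 _) z') (linS_sum (lip1 _) z') mulr_sumr.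
  by apply: eq_bigr => j _; rewrite Hij; ring.
rewrite (linS_sum (lF1 _) y) (linS_sum (lip2 _) y) mulr_sumr.
by apply: eq_bigr => j _; rewrite Hi; ring.
Qed.


Lemma lin_a p q : linS (fun b => Defs.ip G p (br b q)).
Proof. by move=> a u v; rewrite hl ipLr. Qed.
Lemma lin_b p q : linS (fun b => Defs.ip G (br q b) p).
Proof. by move=> a u v; rewrite hr ipLl. Qed.

Lemma trP0 : \tr P = 0.
Proof.
set TA := \sum_i \tr (Am (e i *m P) *m Am (e i *m Gi)).
set TL := \sum_i \tr (Lm (e i *m P) *m star (Lm (e i *m Gi))).
have E1 : lam * \tr P = - 4%:R^-1 * TA - 2%:R^-1 * TL.
  rewrite trE mulr_sumr.
  transitivity (\sum_i Fr (e i *m P) (e i *m Gi)).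
    by apply: eq_bigr => i _; rewrite Fr_ip.
  by rewrite /Fr /TA /TL !mulr_sumr sumrB.
set TA1 := \sum_i \sum_j Defs.ip G (br (e i *m P) (e j *m Gi)) (br (e j) (e i *m Gi)).
set TA2 := \sum_i \sum_j Defs.ip G (br (e i) (e j *m Gi *m P)) (br (e j) (e i *m Gi)).
have E2 : TA = TA1 + TA2.
  rewrite /TA; under eq_bigr do rewrite trAA.
  rewrite exchange_big /=; under eq_bigr do rewrite exchange_big /=.
  rewrite /TA1 /TA2 -big_split /=; apply: eq_bigr => i _.
  rewrite -big_split /=; apply: eq_bigr => j _.
  under eq_bigr do rewrite hsa.
  by rewrite contract hder ipDl.
have E3 : TA1 = - TL.
  rewrite /TA1 /TL -sumrN; apply: eq_bigr => i _.
  rewrite trLS -sumrN.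
  transitivity (\sum_j Defs.ip G (br (e i *m P) (e j)) (br (e j *m Gi) (e i *m Gi))).
    exact: (Cas_sym (f := fun b b' => Defs.ip G (br (e i *m P) b') (br b (e i *m Gi))))
             (fun y => lin_a _ _) (fun x => lin_b _ _).
  by apply: eq_bigr => j _; rewrite (ha (e j *m Gi)) ipNr.
have E4 : TA2 = TA1.
  rewrite /TA2.
  transitivity (\sum_i \sum_j Defs.ip G (br (e i) (e j *m Gi)) (br (e j *m P) (e i *m Gi))).
    apply: eq_bigr => i _; symmetry.
    exact: (Cas_P (f := fun b b' => Defs.ip G (br (e i) b') (br b (e i *m Gi))))
             (fun y => lin_a _ _) (fun x => lin_b _ _).
  rewrite exchange_big /=; apply: eq_bigr => i _; apply: eq_bigr => j _.
  exact: ip_sym.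
have : lam * \tr P = 0 by rewrite E1 E2 E4 E3; lra.
by move/eqP; rewrite mulf_eq0 (negPf hlam) /= => /eqP.
Qed.

End Ein.

End Nil.

End Gen.

Section SD.
Variables (R : realType) (n : nat) (br : 'rV[R]_n -> 'rV[R]_n -> 'rV[R]_n)
  (G : 'M[R]_n) (lam : R) (P : 'M[R]_n).
Hypothesis hlie : is_lie br.
Hypothesis hnil : lie_nilpotent br.
Hypothesis hmet : is_metric G.
Hypothesis hric : ricci_op br G = lam%:M.
Hypothesis hlam : lam != 0.
Hypothesis hder : is_derivation br P.
Hypothesis hsa : self_adjoint G P.
Hypothesis htr : \tr (P *m P) != 0.

Lemma hl : forall a x y z, br (a *: x + y) z = a *: br x z + br y z.
Proof. by case: hlie. Qed.
Lemma ha : forall x y, br x y = - br y x.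
Proof. by case: hlie. Qed.
Lemma Gs : G^T = G. Proof. by case: hmet. Qed.
Lemma Gu : G \in unitmx. Proof. by case: hmet. Qed.

Local Notation sbr := (sd_br br P).
Local Notation Gt := (sd_metric G lam P).
Local Notation Gi := (invmx G).
Definition cc := - (lam^-1 * \tr (P *m P)).
Lemma cc0 : cc != 0.
Proof. by rewrite /cc oppr_eq0 mulf_eq0 invr_eq0 negb_or hlam htr. Qed.

Lemma lsubL a (x y : 'rV[R]_(n + 1)) : lsubmx (a *: x + y) = a *: lsubmx x + lsubmx y.
Proof. by apply/matrixP => i j; rewrite !mxE. Qed.
Lemma rsubL a (x y : 'rV[R]_(n + 1)) :
  (rsubmx (a *: x + y)) 0 0 = a * (rsubmx x) 0 0 + (rsubmx y) 0 0.
Proof. by rewrite !mxE. Qed.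

Lemma sbr_hl a x y z : sbr (a *: x + y) z = a *: sbr x z + sbr y z.
Proof.
rewrite /sd_br scale_row_mx add_row_mx scaler0 addr0; congr row_mx.
rewrite lsubL rsubL hl mulmxDl -scalemxAl.
by apply/rowP => j; rewrite !mxE; ring.
Qed.
Lemma sbr_ha x y : sbr x y = - sbr y x.
Proof.
rewrite /sd_br opp_row_mx oppr0; congr row_mx.
rewrite (ha (lsubmx x)); by apply/rowP => j; rewrite !mxE; ring.
Qed.

Definition Gti : 'M[R]_(n + 1) := block_mx Gi 0 0 (cc^-1)%:M.
Lemma GtGti : Gt *m Gti = 1%:M.
Proof.
rewrite /sd_metric /Gti -/cc mulmx_block !mulmx0 !mul0mx !addr0 !add0r.
by rewrite mulmxV ?Gu // -scalar_mxM mulfV ?cc0 // -scalar_mx_block.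
Qed.
Lemma Gt_unit : Gt \in unitmx.
Proof. by case: (mulmx1_unit GtGti). Qed.
Lemma invGt : invmx Gt = Gti.
Proof. by rewrite -[invmx Gt]mulmx1 -GtGti mulmxA mulVmx ?Gt_unit // mul1mx. Qed.
Lemma Gt_sym : Gt^T = Gt.
Proof. by rewrite /sd_metric tr_block_mx !trmx0 tr_scalar_mx Gs. Qed.


Lemma row1_mul k (s : 'rV[R]_1) (M : 'M[R]_(1, k)) : s *m M = s 0 0 *: M.
Proof. by rewrite {1}[s]mx11_scalar mul_scalar_mx. Qed.
Lemma tr11 (M : 'M[R]_1) : M^T = M.
Proof. by rewrite [M]mx11_scalar tr_scalar_mx. Qed.

Lemma Lt_block v : Lm sbr v =
  block_mx (Lm br (lsubmx v) + (rsubmx v) 0 0 *: P) 0 (- (lsubmx v *m P)) 0.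
Proof.
apply: mx_eqP => x; rewrite (xLm sbr_hl sbr_ha) -[x]hsubmxK mul_row_block.
rewrite /sd_br !row_mxKl !row_mxKr !mulmx0 addr0; congr row_mx.
rewrite mulmxDr (xLm hl ha) -scalemxAr row1_mul scalerN.
by apply/rowP => j; rewrite !mxE; ring.
Qed.

Lemma starT (A : 'M[R]_n) (B : 'M[R]_(n, 1)) (C : 'M[R]_(1, n)) (D : 'M[R]_1) :
  star Gt (block_mx A B C D) =
  block_mx (star G A) (cc^-1 *: (G *m C^T)) (cc *: (B^T *m Gi)) D^T.
Proof.
rewrite /star invGt /Gti /sd_metric -/cc tr_block_mx !mulmx_block.
rewrite !mulmx0 !mul0mx !addr0 !add0r.
congr block_mx.
- by rewrite mul_mx_scalar.
- by rewrite mul_scalar_mx -scalemxAl.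
- by rewrite mul_scalar_mx mul_mx_scalar scalerA mulVf ?cc0 // scale1r.
Qed.


Lemma PG_n : P *m G = G *m P^T.
Proof. exact: (PG Gs hsa). Qed.

Lemma key11 (u a : 'rV[R]_n) : u *m G *m (a *m P)^T = a *m G *m (u *m P)^T.
Proof.
rewrite -[RHS]tr11 !trmx_mul !trmxK Gs !mulmxA -(mulmxA u P) PG_n.
by rewrite !mulmxA.
Qed.

Lemma At_block v : Am sbr Gt v =
  block_mx (Am br G (lsubmx v)) (- cc^-1 *: (G *m (lsubmx v *m P)^T)) (lsubmx v *m P) 0.
Proof.
apply: mx_eqP => x; rewrite (xAm Gt sbr_hl sbr_ha) Lt_block starT.
rewrite -[v in v *m _]hsubmxK -[x in _ = x *m _]hsubmxK !mul_row_block.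
rewrite !trmx0 !mul0mx !scaler0 !mulmx0 !addr0; congr row_mx.
  rewrite starD starZ (starP Gs Gu hsa) mulmxDr -scalemxAr -(xAm G hl ha).
  by rewrite row1_mul.
rewrite -!scalemxAr linearN /= !mulmxN scalerN scaleNr; congr (- (_ *: _)).
by rewrite !mulmxA key11.
Qed.


Lemma tr1 (M : 'M[R]_1) : \tr M = M 0 0.
Proof. by rewrite /mxtrace big_ord1. Qed.

Lemma trPnil : \tr P = 0.
Proof. exact: (trP0 hl ha Gs Gu hnil hder hsa hric hlam). Qed.

Lemma trLt v : \tr (Lm sbr v) = 0.
Proof.
rewrite Lt_block mxtrace_block mxtraceD mxtraceZ (trL0 hl ha hnil) trPnil mxtrace0.
by rewrite mulr0 !addr0.
Qed.

Lemma trLtLt y z : \tr (Lm sbr y *m Lm sbr z) =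
  (rsubmx y) 0 0 * (rsubmx z) 0 0 * \tr (P *m P).
Proof.
rewrite !Lt_block mulmx_block mxtrace_block !mulmx0 !mul0mx !addr0 mxtrace0 addr0.
rewrite !(mulmxDl, mulmxDr) -!scalemxAl -!scalemxAr !mxtraceD !mxtraceZ.
rewrite (trLL0 hl ha hnil) (mxtrace_mulC (Lm br _) P) !(trPL0 hl ha hnil hder).
ring.
Qed.

Lemma trLtS y z : \tr (Lm sbr y *m star Gt (Lm sbr z)) =
  \tr (Lm br (lsubmx y) *m star G (Lm br (lsubmx z)))
  + (rsubmx y) 0 0 * (rsubmx z) 0 0 * \tr (P *m P)
  + cc^-1 * Defs.ip G (lsubmx y *m P) (lsubmx z *m P).
Proof.
rewrite (Lt_block z) starT (Lt_block y) mulmx_block mxtrace_block.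
rewrite !mul0mx !addr0 starD starZ (starP Gs Gu hsa).
rewrite !(mulmxDl, mulmxDr) -!scalemxAl -!scalemxAr !mxtraceD !mxtraceZ.
have h0 : \tr (P *m star G (Lm br (lsubmx z))) = 0.
  rewrite -{1}(starP Gs Gu hsa) -(starM Gu) (tr_star Gu) mxtrace_mulC.
  exact: (trPL0 hl ha hnil hder).
rewrite h0 (mxtrace_mulC (Lm br _) P) (trPL0 hl ha hnil hder) tr1.
rewrite linearN /= mulNmx !mulmxN (@opprK _ (_ *m _)) /Defs.ip !mulmxA.
ring.
Qed.

Lemma trAtAt y z : \tr (Am sbr Gt y *m Am sbr Gt z) =
  \tr (Am br G (lsubmx y) *m Am br G (lsubmx z))
  - cc^-1 * (Defs.ip G (lsubmx z *m P) (lsubmx y *m P)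
             + Defs.ip G (lsubmx y *m P) (lsubmx z *m P)).
Proof.
rewrite !At_block mulmx_block mxtrace_block mulmx0 addr0 mxtraceD.
rewrite (mxtrace_mulC (_ *: _) (lsubmx z *m P)) !tr1 -!scalemxAr !mulmxA.
have sc (a : R) (M : 'M[R]_1) : (a *: M) 0 0 = a * M 0 0 by rewrite mxE.
rewrite !sc /Defs.ip; ring.
Qed.

Lemma ip_t y z : Defs.ip Gt y z =
  Defs.ip G (lsubmx y) (lsubmx z) + cc * (rsubmx y) 0 0 * (rsubmx z) 0 0.
Proof.
rewrite {1}/Defs.ip /sd_metric -/cc -{1}[y]hsubmxK -{1}[z]hsubmxK.
rewrite mul_row_block tr_row_mx mul_row_col !mulmx0 addr0 add0r.
rewrite mul_mx_scalar row1_mul [in LHS]mxE.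
have sc (a : R) (M : 'M[R]_1) : (a *: M) 0 0 = a * M 0 0 by rewrite mxE.
rewrite !sc tr11 /Defs.ip.
ring.
Qed.

Lemma alg (a b q r s T ci : R) :
  - 0 - 4%:R^-1 * (a - ci * (q + q)) - 2%:R^-1 * (r * s * T)
  - 2%:R^-1 * (b + r * s * T + ci * q) = - 4%:R^-1 * a - 2%:R^-1 * b + - T * r * s.
Proof. by field. Qed.

Lemma ric_t y z : ric sbr Gt y z = lam * Defs.ip Gt y z.
Proof.
rewrite (ricF sbr_hl sbr_ha Gt_sym Gt_unit) trLt trAtAt trLtLt trLtS ip_t.
have F := Fr_ip hl ha Gs Gu hnil hric (lsubmx y) (lsubmx z).
rewrite /Fr in F.
have hc : lam * cc = - \tr (P *m P) by rewrite /cc mulrN mulrA mulfV // mul1r.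
rewrite (ip_sym Gs (lsubmx z *m P)).
have -> : lam * (Defs.ip G (lsubmx y) (lsubmx z) + cc * rsubmx y 0 0 * rsubmx z 0 0)
  = lam * Defs.ip G (lsubmx y) (lsubmx z) + (lam * cc) * rsubmx y 0 0 * rsubmx z 0 0.
  by ring.
rewrite hc -F. exact: alg.
Qed.


Lemma ricci_t : ricci_op sbr Gt = lam%:M.
Proof.
rewrite /ricci_op -[lam%:M](mulmxK Gt_unit); congr (_ *m _).
apply/matrixP => i j; rewrite [LHS]mxE ric_t mul_scalar_mx [RHS]mxE.
by rewrite ip_e eM.
Qed.

Lemma metric_t : is_metric Gt.
Proof. by split; [exact: Gt_sym | exact: Gt_unit]. Qed.

Lemma subgP (x : 'rV[R]_(n + 1)) : (x <= sd_g R n)%MS -> rsubmx x = 0.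
Proof. by case/submxP => D ->; rewrite /sd_g mul_mx_row mulmx0 row_mxKr. Qed.
Lemma subg_in (x : 'rV[R]_(n + 1)) : rsubmx x = 0 -> (x <= sd_g R n)%MS.
Proof.
move=> h; rewrite -[x]hsubmxK h.
have -> : row_mx (lsubmx x) 0 = lsubmx x *m sd_g R n.
  by rewrite /sd_g mul_mx_row mulmx1 mulmx0.
exact: submxMl.
Qed.
Lemma subaP (x : 'rV[R]_(n + 1)) : (x <= sd_a R n)%MS -> lsubmx x = 0.
Proof. by case/submxP => D ->; rewrite /sd_a mul_mx_row mulmx0 row_mxKl. Qed.
Lemma suba_in (x : 'rV[R]_(n + 1)) : lsubmx x = 0 -> (x <= sd_a R n)%MS.
Proof.
move=> h; rewrite -[x]hsubmxK h.
have -> : row_mx 0 (rsubmx x) = rsubmx x *m sd_a R n.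
  by rewrite /sd_a mul_mx_row mulmx1 mulmx0.
exact: submxMl.
Qed.

Lemma sbr_g x y : rsubmx (sbr x y) = 0.
Proof. by rewrite /sd_br row_mxKr. Qed.

Lemma iter_g (xs : seq 'rV[R]_(n + 1)) y :
  all (fun x => (x <= sd_g R n)%MS) xs -> (y <= sd_g R n)%MS ->
  iter_br sbr xs y = row_mx (iter_br br (map lsubmx xs) (lsubmx y)) 0.
Proof.
move=> hxs hy; elim: xs hxs => [|x xs IH] /=.
  by move=> _; rewrite -{1}[y]hsubmxK (subgP hy).
case/andP => hx hxs; rewrite IH // /sd_br row_mxKl row_mxKr (subgP hx).
have z0 : (0 : 'rV[R]_1) 0 0 = 0 by rewrite mxE.
by rewrite z0 !scale0r subr0 addr0.
Qed.

Lemma z0 : (0 : 'rV[R]_1) 0 0 = 0.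
Proof. by rewrite mxE. Qed.

Lemma iwasawa_t : pseudo_iwasawa sbr Gt (sd_g R n) (sd_a R n).
Proof.
split.
- apply/andP; split.
    rewrite submx1 /=; apply/row_subP => i.
    set r := row i _.
    have -> : r = row_mx (lsubmx r) 0 + row_mx 0 (rsubmx r).
      by rewrite add_row_mx addr0 add0r hsubmxK.
    apply: addmx_sub_adds; [apply: subg_in; exact: row_mxKr | apply: suba_in; exact: row_mxKl].
  rewrite sub0mx andbT; apply/row_subP => i.
  set r := row i _.
  have h1 : (r <= sd_g R n)%MS := submx_trans (row_sub i _) (capmxSl _ _).
  have h2 : (r <= sd_a R n)%MS := submx_trans (row_sub i _) (capmxSr _ _).
  have -> : r = 0 by rewrite -[r]hsubmxK (subgP h1) (subaP h2) row_mx0.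
  exact: sub0mx.
- split; [|split].
  + move=> u v hu hv; rewrite ip_t (subaP hv) (subgP hu) (ip0r Gs) z0.
    by rewrite mulr0 mul0r addr0.
  + by move=> x y _; apply: subg_in; exact: sbr_g.
  + case: hnil => k hk; exists k => xs y hxs hy hs.
    by rewrite iter_g // hk ?size_map // row_mx0.
- move=> x y hx hy; rewrite /sd_br (subaP hx) (subaP hy) mul0mx !scaler0 subr0 addr0.
  by rewrite (br0l hl) row_mx0.
- move=> x hx u v; rewrite !ip_t !sbr_g z0 !mulr0 !addr0 /sd_br !row_mxKl (subaP hx).
  rewrite (br0l hl) mul0mx scaler0 subr0 !add0r.
  rewrite !(br0l hl) !scaler0 !subr0 !add0r mul0r addr0.
  by rewrite ipZl (ipZr Gs) hsa.
Qed.

End SD.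

Theorem corollary4p12 (R : realType) (n : nat)
    (br : 'rV[R]_n -> 'rV[R]_n -> 'rV[R]_n) (G : 'M[R]_n) (lambda : R)
    (P : 'M[R]_n) :
  is_lie br -> lie_nilpotent br ->
  is_metric G -> ricci_op br G = lambda%:M -> lambda != 0 ->
  is_derivation br P -> self_adjoint G P -> \tr (P *m P) != 0 ->
  [/\ is_metric (sd_metric G lambda P),
      ricci_op (sd_br br P) (sd_metric G lambda P) = lambda%:M &
      pseudo_iwasawa (sd_br br P) (sd_metric G lambda P) (sd_g R n) (sd_a R n)].
Proof.
move=> hlie hnil hmet hric hlam hder hsa htr; split.
- exact: (metric_t hmet hlam htr).
- exact: (ricci_t hlie hnil hmet hric hlam hder hsa htr).
- exact: (iwasawa_t lambda hlie hnil hmet hsa).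
Qed.
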